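(* For all $v,w\in\mathfrak{H}^1$, \[ v\stackrel{t}{\ast}_\hbar w=(S_\hbar^t)^{-1}\bigl(S_\hbar^t(v)\ast_+S_\hbar^t(w)\bigr). \]
   Context: Let $\hbar,t$ be formal variables and $\mathfrak{H}=\mathbb{Q}[\hbar,t]\langle x,y\rangle$ the noncommutative polynomial algebra over $\mathbb{Q}[\hbar,t]$; put $\mathfrak{H}^1=\mathbb{Q}[\hbar,t]+\mathfrak{H}y$ and $z_j=x^{j-1}y$ ($j\ge1$). Let $\mathfrak z$ be the $\mathbb{Q}[\hbar,t]$-span of $\{z_j\}$ with bilinear product $z_i\circ_+ z_j=z_{i+j}+\hbar z_{i+j-1}$, extended to an action on $\mathfrak{H}^1$ by $z_i\circ_+1=0$, $z_i\circ_+(z_jw)=(z_i\circ_+z_j)w$. Let $S_\hbar^t:\mathfrak{H}^1\to\mathfrak{H}^1$ be the $\mathbb{Q}[\hbar,t]$-linear map with $S_\hbar^t(1)=1$ and $S_\hbar^t(z_kw)=z_kS_\hbar^t(w)+t\,z_k\circ_+S_\hbar^t(w)$ for words $w\in\mathfrak{H}^1$ (it is bijective). The product $\ast_+$ on $\mathfrak{H}^1$ is the $\mathbb{Q}[\hbar,t]$-bilinear product with $1\ast_+w=w\ast_+1=w$ and $z_iu\ast_+z_jv=z_i(u\ast_+z_jv)+z_j(z_iu\ast_+v)+(z_i\circ_+z_j)(u\ast_+v)$ for words $u,v,w$. The product $\stackrel{t}{\ast}_\hbar$ on $\mathfrak{H}^1$ is the $\mathbb{Q}[\hbar,t]$-bilinear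 product with $1\stackrel{t}{\ast}_\hbar w=w\stackrel{t}{\ast}_\hbar1=w$ and $z_iu\stackrel{t}{\ast}_\hbar z_jv=z_i(u\stackrel{t}{\ast}_\hbar z_jv)+z_j(z_iu\stackrel{t}{\ast}_\hbar v)+(1-2t)(z_i\circ_+z_j)(u\stackrel{t}{\ast}_\hbar v)+(t^2-t)\,z_i\circ_+z_j\circ_+(u\stackrel{t}{\ast}_\hbar v)$ for $i,j\ge1$ and words $u,v,w$ (here $z_i\circ_+z_j\circ_+X$ means $(z_i\circ_+z_j)\circ_+X$, and $(z_i\circ_+z_j)X$ denotes concatenation). *)

(* Defs.v *)
From HB Require Import structures.
From mathcomp Require Import all_boot all_algebra.
From mathcomp Require Import finmap monalg.
Set Implicit Arguments. Unset Strict Implicit. Unset Printing Implicit Defensive.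
Import GRing.Theory.
Local Open Scope ring_scope.

(* Coefficient ring Q[hbar,t] := (Q[hbar])[t]. *)
Notation Rht := {poly {poly rat}}.
Definition hbar : Rht := ('X)%:P.
Definition tt : Rht := 'X.

(* Words in the letters z_j (j >= 1); the natural number a encodes z_(a+1).
   A word z_(a1+1) ... z_(an+1) is the sequence [:: a1; ...; an]. *)
Definition W := seq nat.

Notation H1 := {malg Rht[W]}.

Definition word (w : W) : H1 := << w >>.

Definition mlin (f : W -> H1) (p : H1) : H1 :=
  \sum_(k <- msupp p) p@_k *: f k.
Definition mbil (f : W -> W -> H1) (p q : H1) : H1 :=
  mlin (fun u => mlin (f u) q) p.

(* (z_(a+1) o_+ z_(b+1)) w = z_(a+b+2) w + hbar z_(a+b+1) w *)
Definition circw (a b : nat) (w : W) : H1 :=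
  word ((a + b).+1 :: w) + hbar *: word ((a + b)%N :: w).

(* z_(a+1) o_+ X, with z o_+ 1 = 0 *)
Definition circ_letter (a : nat) (X : H1) : H1 :=
  mlin (fun w => if w is b :: w' then circw a b w' else 0) X.

(* (z_(a+1) o_+ z_(b+1)) o_+ X *)
Definition circ2 (a b : nat) (X : H1) : H1 :=
  circ_letter (a + b).+1 X + hbar *: circ_letter (a + b) X.

Definition cons_letter (a : nat) (X : H1) : H1 :=
  mlin (fun w => word (a :: w)) X.

Definition circ_cons (a b : nat) (X : H1) : H1 := mlin (circw a b) X.

Fixpoint starp_w (u : W) : W -> H1 :=
  match u with
  | [::] => word
  | a :: u' =>
    fix sp_in (v : W) : H1 :=
      match v with
      | [::] => word (a :: u')
      | b :: v' => cons_letter a (starp_w u' (b :: v'))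
                   + cons_letter b (sp_in v')
                   + circ_cons a b (starp_w u' v')
      end
  end.
Definition starp (p q : H1) : H1 := mbil starp_w p q.

Fixpoint start_w (u : W) : W -> H1 :=
  match u with
  | [::] => word
  | a :: u' =>
    fix st_in (v : W) : H1 :=
      match v with
      | [::] => word (a :: u')
      | b :: v' => cons_letter a (start_w u' (b :: v'))
                   + cons_letter b (st_in v')
                   + (1 - 2%:R * tt) *: circ_cons a b (start_w u' v')
                   + (tt ^+ 2 - tt) *: circ2 a b (start_w u' v')
      end
  end.
Definition start (p q : H1) : H1 := mbil start_w p q.

Fixpoint S_w (w : W) : H1 :=
  match w with
  | [::] => word [::]
  | a :: w' => cons_letter a (S_w w') + tt *: circ_letter a (S_w w')
  end.
Definition S (p : H1) : H1 := mlin S_w p.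

(* Main.v *)
Require Import Defs.
From HB Require Import structures.
From mathcomp Require Import all_boot all_algebra.
From mathcomp Require Import finmap monalg.
From mathcomp Require Import ring zify.
Set Implicit Arguments. Unset Strict Implicit. Unset Printing Implicit Defensive.
Import GRing.Theory.
Local Open Scope ring_scope.

Definition TEg (R : comNzRingType) (V : lmodType R) := (R * V)%type.
HB.instance Definition _ (R : comNzRingType) (V : lmodType R) := GRing.Zmodule.on (TEg V).
Definition te_one (R : comNzRingType) (V : lmodType R) : TEg V := (1, 0).
Definition te_mul (R : comNzRingType) (V : lmodType R) (x y : TEg V) : TEg V :=
  (x.1 * y.1, x.1 *: y.2 + y.1 *: x.2).
Lemma te_mulA (R : comNzRingType) (V : lmodType R) : associative (@te_mul R V).
Proof. move=> [a x] [b y] [c z]; rewrite /te_mul /=.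
by rewrite mulrA !scalerDr !scalerA addrA [c * a]mulrC [c * b]mulrC. Qed.
Lemma te_mulC (R : comNzRingType) (V : lmodType R) : commutative (@te_mul R V).
Proof. by move=> [a x] [b y]; rewrite /te_mul /= mulrC addrC. Qed.
Lemma te_mul1 (R : comNzRingType) (V : lmodType R) : left_id (@te_one R V) (@te_mul R V).
Proof. by move=> [a x]; rewrite /te_mul /= mul1r scale1r scaler0 addr0. Qed.
Lemma te_mulDl (R : comNzRingType) (V : lmodType R) : left_distributive (@te_mul R V) +%R.
Proof. move=> [a x] [b y] [c z]; rewrite /te_mul /=.
by rewrite mulrDl scalerDl scalerDr addrACA. Qed.
Lemma te_one_neq0 (R : comNzRingType) (V : lmodType R) : @te_one R V != 0.
Proof. apply/eqP => -[] /eqP; by rewrite oner_eq0. Qed.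
HB.instance Definition _ (R : comNzRingType) (V : lmodType R) :=
  GRing.Zmodule_isComNzRing.Build (TEg V) (@te_mulA R V) (@te_mulC R V) (@te_mul1 R V)
    (@te_mulDl R V) (@te_one_neq0 R V).

Definition emb (R : comNzRingType) (V : lmodType R) (x : V) : TEg V := (0, x).
Definition sc (R : comNzRingType) (V : lmodType R) (r : R) : TEg V := (r, 0).
Lemma pairD (R : comNzRingType) (V : lmodType R) (a b : R) (x y : V) :
  ((a, x) : TEg V) + (b, y) = (a + b, x + y).
Proof. reflexivity. Qed.
Lemma pairN (R : comNzRingType) (V : lmodType R) (a : R) (x : V) : - ((a, x) : TEg V) = (- a, - x).
Proof. reflexivity. Qed.
Lemma pairM (R : comNzRingType) (V : lmodType R) (a b : R) (x y : V) :
  ((a, x) : TEg V) * (b, y) = (a * b, a *: y + b *: x).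
Proof. reflexivity. Qed.
Lemma embD (R : comNzRingType) (V : lmodType R) (x y : V) : emb (x + y) = emb x + emb y.
Proof. by rewrite /emb pairD addr0. Qed.
Lemma embN (R : comNzRingType) (V : lmodType R) (x : V) : emb (- x) = - emb x.
Proof. by rewrite /emb pairN oppr0. Qed.
Lemma embZ (R : comNzRingType) (V : lmodType R) r (x : V) : emb (r *: x) = sc V r * emb x.
Proof. by rewrite /emb /sc pairM mulr0 scaler0 addr0. Qed.
Lemma emb_inj (R : comNzRingType) (V : lmodType R) : injective (@emb R V).
Proof. by move=> x y []. Qed.
Lemma sc_is_mm (R : comNzRingType) (V : lmodType R) : monoid_morphism (@sc R V).
Proof. split => // r s; by rewrite /sc pairM !scaler0 addr0. Qed.
Lemma sc_is_add (R : comNzRingType) (V : lmodType R) : additive (@sc R V).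
Proof. move=> r s; rewrite /sc. transitivity ((r - s, 0 - 0) : TEg V); first by rewrite subr0. reflexivity. Qed.
HB.instance Definition _ (R : comNzRingType) (V : lmodType R) := GRing.isAdditive.Build R (TEg V) (@sc R V) (@sc_is_add R V).
HB.instance Definition _ (R : comNzRingType) (V : lmodType R) := GRing.isMonoidMorphism.Build R (TEg V) (@sc R V) (@sc_is_mm R V).

Lemma eD (R : comNzRingType) (V : lmodType R) (x y : V) a b : emb x = a -> emb y = b -> emb (x + y) = a + b.
Proof. by move=> <- <-; rewrite embD. Qed.
Lemma eN (R : comNzRingType) (V : lmodType R) (x : V) a : emb x = a -> emb (- x) = - a.
Proof. by move=> <-; rewrite embN. Qed.
Lemma eZ (R : comNzRingType) (V : lmodType R) c (x : V) a : emb x = a -> emb (c *: x) = sc V c * a.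
Proof. by move=> <-; rewrite embZ. Qed.
Lemma e0 (R : comNzRingType) (V : lmodType R) : emb (0 : V) = 0.
Proof. by rewrite -[0 in LHS](scale0r (0 : V)) embZ raddf0 mul0r. Qed.
Lemma eclose (R : comNzRingType) (V : lmodType R) (x y : V) a b : emb x = a -> emb y = b -> a = b -> x = y.
Proof. by move=> <- <-; apply: emb_inj. Qed.

Ltac reifyE t := lazymatch t with
  | ?x + ?y => let p := reifyE x in let q := reifyE y in constr:(eD p q)
  | - ?x => let p := reifyE x in constr:(eN p)
  | ?c *: ?x => let p := reifyE x in constr:(eZ c p)
  | 0 => let E := constr:(emb t) in lazymatch type of E with @TEg ?R ?V => constr:(@e0 R V) end
  | _ => constr:(erefl (emb t))
  end.


Lemma mlinEw (f : W -> H1) (p : H1) (d : {fset W}) : (msupp p `<=` d)%fset ->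
  mlin f p = \sum_(k <- d) p@_k *: f k.
Proof.
move=> le; rewrite /mlin [LHS](big_fset_incl _ le) => //= x xd /mcoeff_outdom ->.
by rewrite scale0r.
Qed.

Lemma mlinD f p q : mlin f (p + q) = mlin f p + mlin f q.
Proof.
have h1 : (msupp p `<=` msupp p `|` msupp q)%fset by apply: fsubsetUl.
have h2 : (msupp q `<=` msupp p `|` msupp q)%fset by apply: fsubsetUr.
rewrite (mlinEw _ (msuppD_le p q)) (mlinEw _ h1) (mlinEw _ h2) -big_split /=.
by apply: eq_bigr => k _; rewrite mcoeffD scalerDl.
Qed.

Lemma mlinZ f c p : mlin f (c *: p) = c *: mlin f p.
Proof.
rewrite (mlinEw _ (msuppZ_le c p)) /mlin scaler_sumr; apply: eq_bigr => k _.
by rewrite mcoeffZ scalerA.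
Qed.

Lemma mlin0 f : mlin f 0 = 0.
Proof. by rewrite /mlin msupp0 big_seq_fset0. Qed.

Lemma mlin_word f w : mlin f (word w) = f w.
Proof. by rewrite /word (mlinEw _ msuppU_le) big_seq_fset1 mcoeffUU scale1r. Qed.

Lemma mlin_funD (f g : W -> H1) c p :
  mlin (fun k => c *: f k + g k) p = c *: mlin f p + mlin g p.
Proof.
rewrite /mlin scaler_sumr -big_split /=; apply: eq_bigr => k _.
by rewrite scalerDr !scalerA mulrC.
Qed.

Lemma eq_mlin (f g : W -> H1) p : f =1 g -> mlin f p = mlin g p.
Proof. by move=> e; apply: eq_bigr => k _; rewrite e. Qed.

Definition linF (F : H1 -> H1) := forall c p q, F (c *: p + q) = c *: F p + F q.

Section LinF.
Variable F : H1 -> H1.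
Hypothesis hF : linF F.
Lemma linF0 : F 0 = 0.
Proof. have := hF 1 0 0; rewrite scaler0 addr0 scale1r. rewrite -{1}(addr0 (F 0)) => /addrI. by move=> <-. Qed.
Lemma linFD p q : F (p + q) = F p + F q.
Proof. by have := hF 1 p q; rewrite !scale1r. Qed.
Lemma linFZ c p : F (c *: p) = c *: F p.
Proof. by rewrite -[c *: p]addr0 hF linF0 addr0. Qed.
Lemma linFN p : F (- p) = - F p.
Proof. by rewrite -scaleN1r linFZ scaleN1r. Qed.
Lemma linFB p q : F (p - q) = F p - F q.
Proof. by rewrite linFD linFN. Qed.
Lemma linF_sum (I : Type) (r : seq I) (P : pred I) (G : I -> H1) :
  F (\sum_(i <- r | P i) G i) = \sum_(i <- r | P i) F (G i).
Proof.
elim: r => [|x r IH]; first by rewrite !big_nil linF0.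
by rewrite !big_cons; case: (P x); rewrite ?linFD IH.
Qed.
End LinF.

Lemma malgU_word (c : Rht) (k : W) : << c *g k >> = c *: word k.
Proof. by apply/malgP => k'; rewrite mcoeffZ /word !mcoeffU mulr_natr. Qed.

Lemma lin_ext F G : linF F -> linF G -> (forall w, F (word w) = G (word w)) ->
  forall p, F p = G p.
Proof.
move=> hF hG e p; rewrite [p]monalgE (linF_sum hF) (linF_sum hG).
by apply: eq_bigr => k _; rewrite malgU_word (linFZ hF) (linFZ hG) e.
Qed.

Lemma linF_mlin f : linF (mlin f).
Proof. by move=> c p q; rewrite mlinD mlinZ. Qed.

Lemma linF_id : linF (fun X => X). Proof. by []. Qed.
Lemma linF_add F G : linF F -> linF G -> linF (fun X => F X + G X).
Proof. move=> hF hG c p q; rewrite hF hG scalerDr; by rewrite addrACA. Qed.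
Lemma linF_sub F G : linF F -> linF G -> linF (fun X => F X - G X).
Proof. move=> hF hG c p q; rewrite hF hG scalerBr opprD; by rewrite addrACA. Qed.
Lemma linF_scale F (c : Rht) : linF F -> linF (fun X => c *: F X).
Proof. by move=> hF d p q; rewrite hF scalerDr !scalerA mulrC. Qed.
Lemma linF_zero : linF (fun _ => 0).
Proof. by move=> c p q; rewrite scaler0 addr0. Qed.
Lemma linF_comp_mlin f G : linF G -> linF (fun X => mlin f (G X)).
Proof. by move=> hG c p q; rewrite hG mlinD mlinZ. Qed.

Lemma lc a : linF (cons_letter a). Proof. exact: linF_mlin. Qed.
Lemma lo a : linF (circ_letter a). Proof. exact: linF_mlin. Qed.
Lemma lcc a b : linF (circ_cons a b). Proof. exact: linF_mlin. Qed.
Lemma lo2 a b : linF (circ2 a b).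
Proof. move=> c p q; rewrite /circ2 (lo _ c) (lo _ c) scalerDr !scalerA mulrC -scalerA.
rewrite scalerDr; by rewrite addrACA. Qed.

Lemma linF_opp G : linF G -> linF (fun X => - G X).
Proof. by move=> hG c p q; rewrite hG opprD scalerN. Qed.
Lemma linF_cons a G : linF G -> linF (fun X => cons_letter a (G X)).
Proof. exact: linF_comp_mlin. Qed.
Lemma linF_circ a G : linF G -> linF (fun X => circ_letter a (G X)).
Proof. exact: linF_comp_mlin. Qed.
Lemma linF_cc a b G : linF G -> linF (fun X => circ_cons a b (G X)).
Proof. exact: linF_comp_mlin. Qed.
Lemma linF_c2 a b G : linF G -> linF (fun X => circ2 a b (G X)).
Proof. by move=> hG c p q; rewrite hG (lo2 a b). Qed.
Lemma linF_starpl Y G : linF G -> linF (fun X => starp (G X) Y).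
Proof. exact: linF_comp_mlin. Qed.
Lemma linF_starpr Y G : linF G -> linF (fun X => starp Y (G X)).
Proof. move=> hG c p q; rewrite /starp /mbil hG -mlin_funD; apply: eq_mlin => u.
by rewrite mlinD mlinZ. Qed.
Lemma linF_startl Y G : linF G -> linF (fun X => start (G X) Y).
Proof. exact: linF_comp_mlin. Qed.
Lemma linF_startr Y G : linF G -> linF (fun X => start Y (G X)).
Proof. move=> hG c p q; rewrite /start /mbil hG -mlin_funD; apply: eq_mlin => u.
by rewrite mlinD mlinZ. Qed.

Fixpoint Sg_w (c : Rht) (w : W) : H1 :=
  match w with
  | [::] => word [::]
  | a :: w' => cons_letter a (Sg_w c w') + c *: circ_letter a (Sg_w c w')
  end.
Definition Sg c := mlin (Sg_w c).
Lemma ls c : linF (Sg c). Proof. exact: linF_mlin. Qed.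

Lemma linF_Sg c G : linF G -> linF (fun X => Sg c (G X)).
Proof. exact: linF_comp_mlin. Qed.

Ltac lin1 := match goal with
  | |- linF (fun X => @?A X + @?B X) => apply: (linF_add (F := A) (G := B))
  | |- linF (fun X => @?A X - @?B X) => apply: (linF_sub (F := A) (G := B))
  | |- linF (fun X => - @?A X) => apply: (linF_opp (G := A))
  | |- linF (fun X => ?c *: @?A X) => apply: (linF_scale (F := A) c)
  | |- linF (fun X => cons_letter ?a (@?A X)) => apply: (linF_cons a (G := A))
  | |- linF (fun X => circ_letter ?a (@?A X)) => apply: (linF_circ a (G := A))
  | |- linF (fun X => circ_cons ?a ?b (@?A X)) => apply: (linF_cc a b (G := A))
  | |- linF (fun X => circ2 ?a ?b (@?A X)) => apply: (linF_c2 a b (G := A))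
  | |- linF (fun X => starp ?Y X) => exact: (linF_starpr Y linF_id)
  | |- linF (fun X => start ?Y X) => exact: (linF_startr Y linF_id)
  | |- linF (fun X => starp (@?A X) ?Y) => apply: (linF_starpl Y (G := A))
  | |- linF (fun X => starp ?Y (@?A X)) => apply: (linF_starpr Y (G := A))
  | |- linF (fun X => start (@?A X) ?Y) => apply: (linF_startl Y (G := A))
  | |- linF (fun X => start ?Y (@?A X)) => apply: (linF_startr Y (G := A))
  | |- linF (fun X => S (@?A X)) => apply: (linF_comp_mlin S_w (G := A))
  | |- linF (fun X => Sg ?c (@?A X)) => apply: (linF_Sg c (G := A))
  | |- linF (fun X => 0) => exact: linF_zero
  | |- linF (fun X => X) => exact: linF_id
  | |- linF (cons_letter ?a) => exact: lc a
  | |- linF (circ_letter ?a) => exact: lo a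
  | |- linF (circ_cons ?a ?b) => exact: lcc a b
  | |- linF (circ2 ?a ?b) => exact: lo2 a b
  | |- linF (Sg ?c) => exact: ls c
  | |- linF (starp ?Y) => exact: (linF_starpr Y linF_id)
  | |- linF (start ?Y) => exact: (linF_startr Y linF_id)
  | |- linF (mlin ?f) => exact: linF_mlin f
  end.
Ltac lin := repeat lin1; match goal with |- linF ?G => fail 1 | _ => idtac end.

Ltac push := rewrite ?(linFD (lc _), linFZ (lc _), linFB (lc _), linFN (lc _), linF0 (lc _),
  linFD (lo _), linFZ (lo _), linFB (lo _), linFN (lo _), linF0 (lo _),
  linFD (lcc _ _), linFZ (lcc _ _), linFB (lcc _ _), linFN (lcc _ _), linF0 (lcc _ _),
  linFD (lo2 _ _), linFZ (lo2 _ _), linFB (lo2 _ _), linFN (lo2 _ _), linF0 (lo2 _ _),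
  linFD (ls _), linFZ (ls _), linFB (ls _), linFN (ls _), linF0 (ls _)).

Ltac atomize := repeat match goal with
  | |- context [cons_letter ?n ?X] => let e := fresh "e" in generalize (cons_letter n X) => e
  | |- context [circ_letter ?n ?X] => let e := fresh "e" in generalize (circ_letter n X) => e
  end.

Ltac closeR := atomize; lazymatch goal with |- ?x = ?y =>
  let p := reifyE x in let q := reifyE y in apply: (eclose p q); ring end.

Lemma consE a w : cons_letter a (word w) = word (a :: w).
Proof. exact: mlin_word. Qed.
Lemma circ_nil a : circ_letter a (word [::]) = 0.
Proof. exact: mlin_word. Qed.
Lemma circ_cw a b w : circ_letter a (word (b :: w)) = circw a b w.
Proof. exact: mlin_word. Qed.

Lemma circC a b X : circ_letter a (cons_letter b X) = circ_cons a b X.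
Proof.
move: X; apply: lin_ext; [lin|lin|].
by move=> w; rewrite consE circ_cw /circ_cons mlin_word.
Qed.

Lemma CCE a b X : circ_cons a b X = cons_letter (a + b).+1 X + hbar *: cons_letter (a + b) X.
Proof.
move: X; apply: lin_ext; [lin|lin|].
by move=> w; rewrite /circ_cons mlin_word /circw !consE.
Qed.

Lemma circO a b X : circ_letter a (circ_letter b X) = circ2 a b X.
Proof.
move: X; apply: lin_ext; [lin|lin|].
case=> [|c w]; first by rewrite /circ2 !circ_nil (linF0 (lo _)) scaler0 addr0.
rewrite /circ2 !circ_cw /circw; push; rewrite !circ_cw /circw.
rewrite !addSn !addnS !addnA.
closeR.
Qed.

Lemma SgE c w : Sg c (word w) = Sg_w c w.
Proof. exact: mlin_word. Qed.

Lemma Sg_cons c a X : Sg c (cons_letter a X) = cons_letter a (Sg c X) + c *: circ_letter a (Sg c X).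
Proof.
move: X; apply: lin_ext; [lin|lin|].
by move=> w; rewrite consE !SgE.
Qed.

Lemma Sg_circ c a X : Sg c (circ_letter a X) = circ_letter a (Sg c X).
Proof.
move: X; apply: lin_ext; [lin|lin|].
case=> [|b w]; first by rewrite circ_nil (linF0 (ls _)) SgE /= circ_nil.
rewrite circ_cw /circw; push; rewrite !SgE /=; push.
rewrite -!SgE circC circO CCE /circ2; push.
closeR.
Qed.

Lemma Sg_comp c d X : Sg c (Sg d X) = Sg (c + d) X.
Proof.
move: X; apply: lin_ext; [lin|lin|].
elim=> [|a w IH]; first by rewrite !SgE.
rewrite !SgE /=; push; rewrite -!SgE Sg_cons Sg_circ IH.
closeR.
Qed.

Lemma Sg0 X : Sg 0 X = X.
Proof.
move: X; apply: lin_ext; [lin|lin|].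
elim=> [|a w IH]; first by rewrite !SgE.
rewrite !SgE /= -SgE IH -consE. closeR.
Qed.

Lemma S_Sg X : S X = Sg tt X.
Proof.
apply: eq_mlin; elim=> [|a w IH] /=; first by []. by rewrite IH.
Qed.

Lemma S_bij : bijective S.
Proof.
exists (Sg (- tt)) => X; rewrite S_Sg Sg_comp ?addNr ?addrN; exact: Sg0.
Qed.

Lemma lspl Y : linF (fun X => starp X Y). Proof. lin. Qed.
Lemma lspr X : linF (fun Y => starp X Y). Proof. lin. Qed.
Lemma lstl Y : linF (fun X => start X Y). Proof. lin. Qed.
Lemma lstr X : linF (fun Y => start X Y). Proof. lin. Qed.

Lemma starpDl X1 X2 Y : starp (X1 + X2) Y = starp X1 Y + starp X2 Y. Proof. exact: (linFD (lspl Y)). Qed.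
Lemma starpZl c X Y : starp (c *: X) Y = c *: starp X Y. Proof. exact: (linFZ (lspl Y)). Qed.
Lemma starp0l Y : starp 0 Y = 0. Proof. exact: (linF0 (lspl Y)). Qed.
Lemma starpDr X Y1 Y2 : starp X (Y1 + Y2) = starp X Y1 + starp X Y2. Proof. exact: (linFD (lspr X)). Qed.
Lemma starpZr c X Y : starp X (c *: Y) = c *: starp X Y. Proof. exact: (linFZ (lspr X)). Qed.
Lemma starp0r X : starp X 0 = 0. Proof. exact: (linF0 (lspr X)). Qed.

Ltac pushs := repeat (push; rewrite ?(starpDl, starpZl, starp0l, starpDr, starpZr, starp0r)).

Lemma starpE u v : starp (word u) (word v) = starp_w u v.
Proof. by rewrite /starp /mbil !mlin_word. Qed.
Lemma startE u v : start (word u) (word v) = start_w u v.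
Proof. by rewrite /start /mbil !mlin_word. Qed.

Lemma starp1l Y : starp (word [::]) Y = Y.
Proof. move: Y; apply: lin_ext; [lin|lin|]. by move=> w; rewrite starpE. Qed.
Lemma starp1r X : starp X (word [::]) = X.
Proof. move: X; apply: lin_ext; [lin|lin|]. by case=> [|a w]; rewrite starpE. Qed.
Lemma start1l Y : start (word [::]) Y = Y.
Proof. move: Y; apply: lin_ext; [lin|lin|]. by move=> w; rewrite startE. Qed.
Lemma start1r X : start X (word [::]) = X.
Proof. move: X; apply: lin_ext; [lin|lin|]. by case=> [|a w]; rewrite startE. Qed.

Lemma starp_rec a b X Y : starp (cons_letter a X) (cons_letter b Y) =
  cons_letter a (starp X (cons_letter b Y)) + cons_letter b (starp (cons_letter a X) Y)
  + circ_cons a b (starp X Y).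
Proof.
move: X; apply: lin_ext; [lin|lin|]. move=> u.
move: Y; apply: lin_ext; [lin|lin|]. move=> v.
by rewrite !consE !starpE.
Qed.

Lemma start_rec a b X Y : start (cons_letter a X) (cons_letter b Y) =
  cons_letter a (start X (cons_letter b Y)) + cons_letter b (start (cons_letter a X) Y)
  + (1 - 2%:R * tt) *: circ_cons a b (start X Y) + (tt ^+ 2 - tt) *: circ2 a b (start X Y).
Proof.
move: X; apply: lin_ext; [lin|lin|]. move=> u.
move: Y; apply: lin_ext; [lin|lin|]. move=> v.
by rewrite !consE !startE.
Qed.

Record Base (V : lmodType Rht) := mkBase {
 Cf : nat -> V -> V; Of : nat -> V -> V; CCf : nat -> nat -> V -> V; O2f : nat -> nat -> V -> V;
 SPf : V -> V -> V; onef : V;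
 CD : forall a p q, Cf a (p + q) = Cf a p + Cf a q;
 CZ : forall a c p, Cf a (c *: p) = c *: Cf a p;
 CN : forall a p, Cf a (- p) = - Cf a p;
 C0 : forall a, Cf a 0 = 0;
 OD : forall a p q, Of a (p + q) = Of a p + Of a q;
 OZ : forall a c p, Of a (c *: p) = c *: Of a p;
 ON : forall a p, Of a (- p) = - Of a p;
 O0 : forall a, Of a 0 = 0;
 SPDl : forall p q Y, SPf (p + q) Y = SPf p Y + SPf q Y;
 SPZl : forall c p Y, SPf (c *: p) Y = c *: SPf p Y;
 SPNl : forall p Y, SPf (- p) Y = - SPf p Y;
 SP0l : forall Y, SPf 0 Y = 0;
 SPDr : forall X p q, SPf X (p + q) = SPf X p + SPf X q;
 SPZr : forall X c p, SPf X (c *: p) = c *: SPf X p;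
 SPNr : forall X p, SPf X (- p) = - SPf X p;
 SP0r : forall X, SPf X 0 = 0;
 circCf : forall a b X, Of a (Cf b X) = CCf a b X;
 CCEf : forall a b X, CCf a b X = Cf (a + b).+1 X + hbar *: Cf (a + b) X;
 circOf : forall a b X, Of a (Of b X) = O2f a b X;
 O2Ef : forall a b X, O2f a b X = Of (a + b).+1 X + hbar *: Of (a + b) X;
 SPrec : forall a b X Y, SPf (Cf a X) (Cf b Y) =
     Cf a (SPf X (Cf b Y)) + Cf b (SPf (Cf a X) Y) + CCf a b (SPf X Y);
 Oone : forall a, Of a onef = 0;
 SP1l : forall Y, SPf onef Y = Y;
 SP1r : forall X, SPf X onef = X }.

Ltac pushA := rewrite ?(CD, CZ, CN, OD, OZ, ON, SPDl, SPZl, SPNl, SPDr, SPZr, SPNr).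
Ltac expandA := do 4 (rewrite ?SPrec ?circCf ?circOf ?CCEf ?O2Ef; pushA).
Ltac atomizeA C O := repeat match goal with
  | |- context [C ?n ?X] => let e := fresh "e" in generalize (C n X) => e
  | |- context [O ?n ?X] => let e := fresh "e" in generalize (O n X) => e
  end.
Ltac closeA C O := atomizeA C O; lazymatch goal with |- ?x = ?y =>
  let p := reifyE x in let q := reifyE y in apply: (eclose p q); ring end.
Ltac destrB B := case: B => C O CC O2 SP one CD CZ CN C0 OD OZ ON O0 SPDl SPZl SPNl SP0l SPDr SPZr SPNr SP0r
  circCf CCEf circOf O2Ef SPrec Oone SP1l SP1r /=.

Lemma D1s (V : lmodType Rht) (B : Base V) a b c W Y :
  SPf B (Of B a (Cf B c W)) (Cf B b Y) =
  Of B a (SPf B (Cf B c W) (Cf B b Y)) + Cf B b (SPf B (Of B a (Cf B c W)) Y)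
  - CCf B a b (SPf B (Cf B c W) Y).
Proof.
expandA. rewrite ?addSn ?addnS ?addnA. closeA (Cf B) (Of B).
Qed.

Ltac natN a b := rewrite ?addSn ?addnS ?addnA ?(addnC b a).

Lemma D1n (V : lmodType Rht) (B : Base V) a b Y :
  SPf B (Of B a (onef B)) (Cf B b Y) =
  Of B a (SPf B (onef B) (Cf B b Y)) + Cf B b (SPf B (Of B a (onef B)) Y)
  - CCf B a b (SPf B (onef B) Y).
Proof. rewrite !Oone !SP0l !SP1l circCf C0. closeA (Cf B) (Of B). Qed.

Lemma D2s (V : lmodType Rht) (B : Base V) a b d X W :
  SPf B (Cf B a X) (Of B b (Cf B d W)) =
  Of B b (SPf B (Cf B a X) (Cf B d W)) + Cf B a (SPf B X (Of B b (Cf B d W)))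
  - CCf B a b (SPf B X (Cf B d W)).
Proof. expandA. natN a b. closeA (Cf B) (Of B). Qed.

Lemma D2n (V : lmodType Rht) (B : Base V) a b X :
  SPf B (Cf B a X) (Of B b (onef B)) =
  Of B b (SPf B (Cf B a X) (onef B)) + Cf B a (SPf B X (Of B b (onef B)))
  - CCf B a b (SPf B X (onef B)).
Proof. rewrite !Oone !SP0r !SP1r circCf C0 !CCEf. natN a b. closeA (Cf B) (Of B). Qed.

Lemma D3s (V : lmodType Rht) (B : Base V) a b c d U V0 :
  SPf B (Of B a (Cf B c U)) (Of B b (Cf B d V0)) =
  Of B a (SPf B (Cf B c U) (Of B b (Cf B d V0))) + Of B b (SPf B (Of B a (Cf B c U)) (Cf B d V0))
  - O2f B a b (SPf B (Cf B c U) (Cf B d V0)).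
Proof. expandA. natN a b. rewrite ?(addnAC a c b). closeA (Cf B) (Of B). Qed.

Lemma D3nX (V : lmodType Rht) (B : Base V) a b Y :
  SPf B (Of B a (onef B)) (Of B b Y) =
  Of B a (SPf B (onef B) (Of B b Y)) + Of B b (SPf B (Of B a (onef B)) Y)
  - O2f B a b (SPf B (onef B) Y).
Proof. rewrite !Oone !SP0l !SP1l O0 circOf. closeA (Cf B) (Of B). Qed.

Lemma D3nY (V : lmodType Rht) (B : Base V) a b X :
  SPf B (Of B a X) (Of B b (onef B)) =
  Of B a (SPf B X (Of B b (onef B))) + Of B b (SPf B (Of B a X) (onef B))
  - O2f B a b (SPf B X (onef B)).
Proof. rewrite !Oone !SP0r !SP1r O0 !circOf !O2Ef. natN a b. closeA (Cf B) (Of B). Qed.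

Lemma mainstep (V : lmodType Rht) (B : Base V) (SS : V -> V) (ST : V -> V -> V)
  (SSD : forall p q, SS (p + q) = SS p + SS q) (SSZ : forall c p, SS (c *: p) = c *: SS p)
  (SSN : forall p, SS (- p) = - SS p)
  (SScons : forall a X, SS (Cf B a X) = Cf B a (SS X) + tt *: Of B a (SS X))
  (SScirc : forall a X, SS (Of B a X) = Of B a (SS X))
  (D1 : forall a b X Y, SPf B (Of B a X) (Cf B b Y) =
     Of B a (SPf B X (Cf B b Y)) + Cf B b (SPf B (Of B a X) Y) - CCf B a b (SPf B X Y))
  (D2 : forall a b X Y, SPf B (Cf B a X) (Of B b Y) =
     Of B b (SPf B (Cf B a X) Y) + Cf B a (SPf B X (Of B b Y)) - CCf B a b (SPf B X Y))
  (D3 : forall a b X Y, SPf B (Of B a X) (Of B b Y) =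
     Of B a (SPf B X (Of B b Y)) + Of B b (SPf B (Of B a X) Y) - O2f B a b (SPf B X Y))
  a b Xu Xv
  (STrec : ST (Cf B a Xu) (Cf B b Xv) = Cf B a (ST Xu (Cf B b Xv)) + Cf B b (ST (Cf B a Xu) Xv)
     + (1 - 2%:R * tt) *: CCf B a b (ST Xu Xv) + (tt ^+ 2 - tt) *: O2f B a b (ST Xu Xv))
  (IH1 : SS (ST Xu (Cf B b Xv)) = SPf B (SS Xu) (SS (Cf B b Xv)))
  (IH2 : SS (ST (Cf B a Xu) Xv) = SPf B (SS (Cf B a Xu)) (SS Xv))
  (IH3 : SS (ST Xu Xv) = SPf B (SS Xu) (SS Xv)) :
  SS (ST (Cf B a Xu) (Cf B b Xv)) = SPf B (SS (Cf B a Xu)) (SS (Cf B b Xv)).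
Proof.
rewrite STrec !CCEf !O2Ef ?(SSD, SSZ, SSN, SScons, SScirc) IH1 IH2 IH3 ?SScons.
move: (SS Xu) (SS Xv) => U W.
pushA.
do 3 (rewrite ?D1 ?D2 ?D3 ?SPrec ?circCf ?circOf ?CCEf ?O2Ef; pushA).
natN a b.
closeA (Cf B) (Of B).
Qed.

Definition Bc : Base H1.
Proof.
apply: (@mkBase H1 cons_letter circ_letter circ_cons circ2 starp (word [::])).
- by move=> *; exact: (linFD (lc _)).
- by move=> *; exact: (linFZ (lc _)).
- by move=> *; exact: (linFN (lc _)).
- by move=> *; exact: (linF0 (lc _)).
- by move=> *; exact: (linFD (lo _)).
- by move=> *; exact: (linFZ (lo _)).
- by move=> *; exact: (linFN (lo _)).
- by move=> *; exact: (linF0 (lo _)).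
- exact: starpDl.
- exact: starpZl.
- by move=> p Y; rewrite (linFN (lspl Y)).
- exact: starp0l.
- exact: starpDr.
- by move=> X c p; exact: starpZr.
- by move=> X p; rewrite (linFN (lspr X)).
- exact: starp0r.
- exact: circC.
- exact: CCE.
- exact: circO.
- by move=> *; rewrite /circ2.
- exact: starp_rec.
- exact: circ_nil.
- exact: starp1l.
- exact: starp1r.
Defined.

Lemma D1c a b X Y : starp (circ_letter a X) (cons_letter b Y) =
  circ_letter a (starp X (cons_letter b Y)) + cons_letter b (starp (circ_letter a X) Y)
  - circ_cons a b (starp X Y).
Proof.
move: X; apply: lin_ext; [lin|lin|].
case=> [|c w]; first exact: (D1n Bc a b Y).
rewrite -consE; exact: (D1s Bc a b c (word w) Y).
Qed.

Lemma D2c a b X Y : starp (cons_letter a X) (circ_letter b Y) =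
  circ_letter b (starp (cons_letter a X) Y) + cons_letter a (starp X (circ_letter b Y))
  - circ_cons a b (starp X Y).
Proof.
move: Y; apply: lin_ext; [lin|lin|].
case=> [|d w]; first exact: (D2n Bc a b X).
rewrite -consE; exact: (D2s Bc a b d X (word w)).
Qed.

Lemma D3c a b X Y : starp (circ_letter a X) (circ_letter b Y) =
  circ_letter a (starp X (circ_letter b Y)) + circ_letter b (starp (circ_letter a X) Y)
  - circ2 a b (starp X Y).
Proof.
move: X; apply: lin_ext; [lin|lin|].
case=> [|c u]; first exact: (D3nX Bc a b Y).
move: Y; apply: lin_ext; [lin|lin|].
case=> [|d v]; first exact: (D3nY Bc a b (word (c :: u))).
rewrite -!consE; exact: (D3s Bc a b c d (word u) (word v)).
Qed.

Lemma S_cons a X : S (cons_letter a X) = cons_letter a (S X) + tt *: circ_letter a (S X).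
Proof. by rewrite !S_Sg Sg_cons. Qed.
Lemma S_circ a X : S (circ_letter a X) = circ_letter a (S X).
Proof. by rewrite !S_Sg Sg_circ. Qed.
Lemma lS : linF S. Proof. exact: linF_mlin. Qed.
Lemma S1 : S (word [::]) = word [::]. Proof. exact: mlin_word. Qed.

Lemma main_words n u v : (size u + size v <= n)%N ->
  S (start (word u) (word v)) = starp (S (word u)) (S (word v)).
Proof.
elim: n u v => [|n IH] u v.
  case: u => [|a u] //; case: v => [|b v] // _.
  by rewrite start1l S1 starp1l.
case: u => [|a u]; first by rewrite start1l S1 starp1l.
case: v => [|b v]; first by rewrite start1r S1 starp1r.
rewrite /= addnS ltnS => hn.
rewrite -!consE.
apply: (mainstep (B := Bc) (SS := S) (ST := start) (linFD lS) (linFZ lS) (linFN lS)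
   S_cons S_circ D1c D2c D3c).
- exact: start_rec.
- have := IH u (b :: v); rewrite -consE => h; apply: h => /=; lia.
- have := IH (a :: u) v; rewrite -consE => h; apply: h => /=; lia.
- apply: IH; lia.
Qed.

Lemma main_lift p q : S (start p q) = starp (S p) (S q).
Proof.
move: p; apply: lin_ext; [lin|lin|] => u.
move: q; apply: lin_ext; [lin|lin|] => v.
exact: (main_words (leqnn _)).
Qed.

Theorem proposition2p4 :
  bijective S /\
  (forall Sinv : H1 -> H1, cancel S Sinv -> cancel Sinv S ->
     forall v w : H1, start v w = Sinv (starp (S v) (S w))).
Proof.
split; first exact: S_bij.
by move=> Sinv h1 h2 v w; rewrite -main_lift h1.
Qed.
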